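(* Let $\{\Delta_1,\dots,\Delta_r\}$ be a nef-partition of a reflexive polytope $\Delta$ with dual nef-partition $\{\nabla_1,\dots,\nabla_r\}$. Let $v$ be any lattice point of $\partial\Delta^*$ and $\Gamma(v)$ the minimal face of $\Delta^*$ containing $v$. Then $\Gamma(v)$ is a face of $\nabla_i$ for some $i\in\{1,\dots,r\}$.
   Context: Let $M\cong\mathbb Z^d$, $N=\mathrm{Hom}(M,\mathbb Z)$, $\langle\cdot,\cdot\rangle$ the pairing. A $d$-dimensional lattice polytope $\Delta\subset M_{\mathbb R}$ is reflexive if $\Delta=\{x:\langle x,e_k\rangle\ge-1,\ k=1,\dots,n\}$ with $e_k\in N$ the primitive inward facet normals; $\Delta^*=\mathrm{Conv}(e_1,\dots,e_n)$. A nef-partition of $\Delta$ is a Minkowski decomposition $\Delta=\Delta_1+\dots+\Delta_r$ into lattice polytopes with $\varphi_j(e_k)\in\{0,1\}$ for all $j,k$, where $\varphi_j(y)=-\min_{x\in\Delta_j}\langle x,y\rangle$. The dual nef-partition consists of $\nabla_j=\mathrm{Conv}(\{0\}\cup\{e_k:\varphi_j(e_k)=1\})\subset N_{\mathbb R}$; it is known that $\Delta^*=\mathrm{Conv}(\nabla_1\cup\dots\cup\nabla_r)$. *)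

(* Defs.v *)
(* real vector spaces M_R = N_R = 'rV[R]_d over R : realType,
   with M = N = Z^d (dual bases) and the pairing <x,y> = sum_i x_i y_i. *)
From HB Require Import structures.
From mathcomp Require Import all_boot all_order all_algebra.
From mathcomp Require Import reals.
Set Implicit Arguments. Unset Strict Implicit. Unset Printing Implicit Defensive.
Import Order.TTheory GRing.Theory Num.Theory.
Local Open Scope ring_scope.

Section Polytopes.
Variables (R : realType) (d : nat).

Definition pset := 'rV[R]_d -> Prop.

Definition pairing (x y : 'rV[R]_d) : R := \sum_(i < d) x ord0 i * y ord0 i.

Definition integral (x : 'rV[R]_d) : Prop :=
  forall i : 'I_d, exists z : int, x ord0 i = z%:~R.

Definition primitive (y : 'rV[R]_d) : Prop :=
  integral y /\ y != 0 /\
  forall m : nat, (1 < m)%N -> ~ integral ((m%:R)^-1 *: y).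

Definition conv (A : pset) : pset := fun x =>
  exists (n : nat) (p : 'I_n -> 'rV[R]_d) (w : 'I_n -> R),
    [/\ forall i, A (p i), forall i, 0 <= w i, \sum_i w i = 1
      & x = \sum_i w i *: p i].

Definition lattice_polytope (P : pset) : Prop :=
  exists S : seq 'rV[R]_d, (forall s, s \in S -> integral s) /\
    forall x, P x <-> conv (fun y => y \in S) x.

Definition interior (P : pset) (x : 'rV[R]_d) : Prop :=
  exists2 eps : R, 0 < eps &
    forall z : 'rV[R]_d, (forall i, `|z ord0 i| <= eps) -> P (x + z).
Definition boundary (P : pset) (x : 'rV[R]_d) : Prop := P x /\ ~ interior P x.
Definition full_dim (P : pset) : Prop := exists x, interior P x.

(* faces: intersections with supporting hyperplanes (P itself and the
   empty set included) *)
Definition face (P F : pset) : Prop :=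
  exists (y : 'rV[R]_d) (c : R),
    (forall x, P x -> c <= pairing x y) /\
    (forall x, F x <-> P x /\ pairing x y = c).

Definition set_sub (A B : pset) : Prop := forall x, A x -> B x.
Definition set_eq (A B : pset) : Prop := forall x, A x <-> B x.

Definition facet (P F : pset) : Prop :=
  [/\ face P F, (exists x, F x), (exists x, P x /\ ~ F x) &
      forall G, face P G -> set_sub F G -> set_eq G F \/ set_eq G P].

Definition min_face (P : pset) (v : 'rV[R]_d) (G : pset) : Prop :=
  [/\ face P G, G v & forall F, face P F -> F v -> set_sub G F].

(* Delta is reflexive with (duplicate-free) list e of its primitive inward
   facet normals: Delta = {x : <x,e_k> >= -1}. *)
Definition reflexive_polytope (Delta : pset) (e : seq 'rV[R]_d) : Prop :=
  [/\ lattice_polytope Delta, full_dim Delta, uniq e,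
      (forall y, y \in e -> primitive y) &
      [/\ (forall y, y \in e -> facet Delta (fun x => Delta x /\ pairing x y = -1)),
          (forall F, facet Delta F -> exists2 y, y \in e &
              set_eq F (fun x => Delta x /\ pairing x y = -1))
        & forall x, Delta x <-> forall y, y \in e -> -1 <= pairing x y]].

(* phi_P(y) = c, where phi_P(y) = - min_{x in P} <x,y> *)
Definition phi_is (P : pset) (y : 'rV[R]_d) (c : R) : Prop :=
  (exists2 x, P x & pairing x y = - c) /\ (forall x, P x -> - c <= pairing x y).

Definition nef_partition (Delta : pset) (e : seq 'rV[R]_d) (r : nat)
    (D : 'I_r -> pset) : Prop :=
  [/\ forall j, lattice_polytope (D j),
      (forall x, Delta x <-> exists xs : 'I_r -> 'rV[R]_d,
          (forall j, D j (xs j)) /\ x = \sum_j xs j)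
    & forall j y, y \in e -> phi_is (D j) y 0 \/ phi_is (D j) y 1].

Definition dual_poly (e : seq 'rV[R]_d) : pset := conv (fun y => y \in e).

Definition nabla (e : seq 'rV[R]_d) (r : nat) (D : 'I_r -> pset) (j : 'I_r)
  : pset := conv (fun y => y = 0 \/ (y \in e /\ phi_is (D j) y 1)).

End Polytopes.

(* Main.v *)
Require Import Defs.
From HB Require Import structures.
From mathcomp Require Import all_boot all_order all_algebra.
From mathcomp Require Import reals.
From mathcomp Require Import ring lra.
From Stdlib Require Import Classical IndefiniteDescription.
Set Implicit Arguments. Unset Strict Implicit. Unset Printing Implicit Defensive.
Import Order.TTheory GRing.Theory Num.Theory.
Local Open Scope ring_scope.

Lemma choice_fun (A B : Type) (P : A -> B -> Prop) :
  (forall a, exists b, P a b) -> exists f : A -> B, forall a, P a (f a).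
Proof.
move=> H; exists (fun a => proj1_sig (constructive_indefinite_description _ (H a))).
by move=> a; case: (constructive_indefinite_description _ (H a)).
Qed.

Section Aux.
Variables (R : realType) (d : nat).
Implicit Types (x y z : 'rV[R]_d).
Local Notation pairing := (@pairing R d).
Local Notation conv := (@conv R d).

Lemma pairingC x y : pairing x y = pairing y x.
Proof. by apply: eq_bigr => i _; rewrite mulrC. Qed.

Lemma pairingDl x y z : pairing (x + y) z = pairing x z + pairing y z.
Proof. by rewrite /Defs.pairing -big_split; apply: eq_bigr => i _; rewrite mxE mulrDl. Qed.

Lemma pairingZl a x z : pairing (a *: x) z = a * pairing x z.
Proof. by rewrite /Defs.pairing mulr_sumr; apply: eq_bigr => i _; rewrite mxE mulrA. Qed.

Lemma pairing0l z : pairing 0 z = 0.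
Proof. by rewrite /Defs.pairing big1 // => i _; rewrite mxE mul0r. Qed.

Lemma pairingNl x z : pairing (- x) z = - pairing x z.
Proof. by rewrite -scaleN1r pairingZl mulN1r. Qed.

Lemma pairingBl x y z : pairing (x - y) z = pairing x z - pairing y z.
Proof. by rewrite pairingDl pairingNl. Qed.

Lemma pairingDr x y z : pairing z (x + y) = pairing z x + pairing z y.
Proof. by rewrite !(pairingC z) pairingDl. Qed.
Lemma pairingZr a x z : pairing z (a *: x) = a * pairing z x.
Proof. by rewrite !(pairingC z) pairingZl. Qed.
Lemma pairing0r z : pairing z 0 = 0.
Proof. by rewrite pairingC pairing0l. Qed.
Lemma pairingBr x y z : pairing z (x - y) = pairing z x - pairing z y.
Proof. by rewrite !(pairingC z) pairingBl. Qed.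

Lemma pairing_suml (I : Type) (r : seq I) (P : pred I) (F : I -> 'rV[R]_d) z :
  pairing (\sum_(i <- r | P i) F i) z = \sum_(i <- r | P i) pairing (F i) z.
Proof. by elim/big_rec2: _ => [|i y1 y2 _ <-]; rewrite ?pairing0l ?pairingDl. Qed.

Lemma pairing_self_gt0 x : x != 0 -> 0 < pairing x x.
Proof.
move=> nx; rewrite lt_def; apply/andP; split; last first.
  by apply: sumr_ge0 => i _; rewrite -expr2 sqr_ge0.
apply/eqP => H; move/eqP: nx; apply; apply/rowP => i; rewrite mxE.
have := @psumr_eq0P _ _ xpredT (fun i => x ord0 i * x ord0 i).
move=> /(_ (fun i _ => ltac:(rewrite -expr2 sqr_ge0 //))) /(_ H i isT) /eqP.
by rewrite mulf_eq0 orbb => /eqP; rewrite (ord1 ord0).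
Qed.

Lemma conv_single (A : pset R d) x : A x -> conv A x.
Proof.
move=> Ax; exists 1%N, (fun _ => x), (fun _ => 1); split => //.
  by rewrite big_ord1.
by rewrite big_ord1 scale1r.
Qed.

Lemma conv_ge (A : pset R d) y c p :
  (forall q, A q -> c <= pairing q y) -> conv A p -> c <= pairing p y.
Proof.
move=> H [n [q [w [Aq w0 w1 ->]]]].
rewrite pairing_suml.
have -> : c = \sum_(i < n) w i * c by rewrite -mulr_suml w1 mul1r.
by apply: ler_sum => i _; rewrite pairingZl ler_wpM2l // H.
Qed.

Lemma supp_eq n (p : 'I_n -> 'rV[R]_d) (w : 'I_n -> R) y c :
  (forall i, 0 <= w i) -> (forall i, c <= pairing (p i) y) -> \sum_i w i = 1 ->
  pairing (\sum_i w i *: p i) y = c -> forall i, w i != 0 -> pairing (p i) y = c.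
Proof.
move=> w0 H w1 E i wi.
have S : \sum_i w i * (pairing (p i) y - c) = 0.
  rewrite (eq_bigr (fun i => w i * pairing (p i) y - w i * c)); last by move=> j _; rewrite mulrBr.
  rewrite sumrB -mulr_suml w1 mul1r -E pairing_suml.
  by rewrite [X in _ - X](eq_bigr (fun i => w i * pairing (p i) y)) ?subrr // => j _; exact: pairingZl.
have := @psumr_eq0P _ _ xpredT (fun i => w i * (pairing (p i) y - c)).
have P0 : forall j, xpredT j -> 0 <= w j * (pairing (p j) y - c).
  by move=> j _; apply: mulr_ge0 => //; rewrite subr_ge0.
move=> /(_ P0) /(_ S i isT) /eqP.
by rewrite mulf_eq0 (negbTE wi) /= subr_eq0 => /eqP.
Qed.

Lemma conv_min (A : pset R d) x v : conv A x -> exists q, A q /\ pairing q v <= pairing x v.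
Proof.
move=> [n [q [w [Aq w0 w1 Ex]]]].
apply: NNPP => Hn.
have H : forall i, pairing x v < pairing (q i) v.
  move=> i; rewrite ltNge; apply/negP => Hi; apply: Hn; exists (q i); split => //.
have Hz : forall i, w i != 0 -> pairing (q i) v = pairing x v.
  apply: (supp_eq (y := v)) => //; first by move=> i; apply: ltW.
  by rewrite -Ex.
have : \sum_i w i = 0.
  apply: big1 => i _; apply/eqP; apply: contraT => wi.
  by have := H i; rewrite (Hz i wi) ltxx.
by rewrite w1 => /eqP; rewrite oner_eq0.
Qed.

Lemma conv_convex (A : pset R d) x y t :
  conv A x -> conv A y -> 0 <= t -> t <= 1 -> conv A (t *: x + (1 - t) *: y).
Proof.
move=> [n1 [p1 [w1 [A1 w10 w11 ->]]]] [n2 [p2 [w2 [A2 w20 w21 ->]]]] t0 t1.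
exists (n1 + n2)%N,
  (fun i => match split i with inl j => p1 j | inr j => p2 j end),
  (fun i => match split i with inl j => t * w1 j | inr j => (1 - t) * w2 j end).
split.
- by move=> i; case: (split i).
- move=> i; case: (split i) => j; apply: mulr_ge0 => //; by rewrite subr_ge0.
- rewrite big_split_ord /=.
  under eq_bigr do rewrite (unsplitK (inl _)).
  under [X in _ + X]eq_bigr do rewrite (unsplitK (inr _)).
  by rewrite -!mulr_sumr w11 w21 !mulr1 addrC subrK.
- rewrite big_split_ord /=.
  under [in RHS]eq_bigr do rewrite (unsplitK (inl _)).
  under [X in _ = _ + X]eq_bigr do rewrite (unsplitK (inr _)).
  rewrite !scaler_sumr; congr (_ + _); apply: eq_bigr => i _; by rewrite scalerA.
Qed.

Lemma conv_of_supp (A : pset R d) n (p : 'I_n -> 'rV[R]_d) (w : 'I_n -> R) q0 :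
  (forall i, 0 <= w i) -> \sum_i w i = 1 -> A q0 ->
  (forall i, w i != 0 -> A (p i)) -> conv A (\sum_i w i *: p i).
Proof.
move=> w0 w1 Aq H.
exists n, (fun i => if w i == 0 then q0 else p i), w; split => //.
- by move=> i; case: eqP => // /eqP; apply: H.
- apply: eq_bigr => i _; case: eqP => // ->; by rewrite !scale0r.
Qed.

Lemma mem_bound (S : seq 'rV[R]_d) s i :
  s \in S -> `|s ord0 i| <= \sum_(s' <- S) `|s' ord0 i|.
Proof.
elim: S => // a S IH; rewrite in_cons big_cons => /orP [/eqP -> | /IH H].
  by rewrite lerDl sumr_ge0.
by rewrite (le_trans H) // lerDr.
Qed.

Lemma conv_bound (S : seq 'rV[R]_d) x i :
  conv (fun y => y \in S) x -> `|x ord0 i| <= \sum_(s' <- S) `|s' ord0 i|.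
Proof.
move=> [n [q [w [Aq w0 w1 ->]]]].
rewrite summxE (le_trans (ler_norm_sum _ _ _)) //.
set B := \sum_(s' <- S) _.
have -> : B = \sum_(j < n) w j * B by rewrite -mulr_suml w1 mul1r.
apply: ler_sum => j _; rewrite mxE normrM ger0_norm //.
by rewrite ler_wpM2l // mem_bound.
Qed.

End Aux.
Section Farkas.
Variables (R : realType) (d : nat).
Local Notation pairing := (@pairing R d).

Lemma farkas n : forall (a : nat -> 'rV[R]_d) (b : 'rV[R]_d),
  (exists mu : nat -> R, (forall k, 0 <= mu k) /\ b = \sum_(k < n) mu k *: a k) \/
  (exists y, (forall k, (k < n)%N -> 0 <= pairing (a k) y) /\ pairing b y < 0).
Proof.
elim: n => [|n IH] a b.
  have [->|nb] := eqVneq b 0.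
    by left; exists (fun _ => 0); rewrite big_ord0.
  right; exists (- b); split => // ; rewrite -scaleN1r pairingZr mulN1r oppr_lt0.
  exact: pairing_self_gt0.
have [[mu [mu0 Eb]]|[y [Hy by0]]] := IH (fun k => a k.+1) b.
  left; exists (fun k => if k is k'.+1 then mu k' else 0); split.
    by case.
  by rewrite big_ord_recl /= scale0r add0r Eb.
have [a0y|a0y] := leP 0 (pairing (a 0%N) y).
  by right; exists y; split => //; case => // k /Hy.
set al := pairing (a 0%N) y.
have aln : al != 0 by rewrite lt_eqF.
have [[mu [mu0 Eb]]|[y' [Hy' by']]] :=
  IH (fun k => a k.+1 - (pairing (a k.+1) y / al) *: a 0%N) (b - (pairing b y / al) *: a 0%N).
  left.
  exists (fun k => if k is k'.+1 then mu k' else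
     pairing b y / al - \sum_(i < n) mu i * (pairing (a i.+1) y / al)); split.
    case => // ; rewrite subr_ge0 (@le_trans _ _ 0) //.
      apply: sumr_le0 => i _; rewrite mulr_ge0_le0 //.
      by rewrite ler_ndivrMr // mul0r Hy.
    by rewrite ltW // ltr_ndivlMr // mul0r.
  rewrite big_ord_recl /=.
  set c := pairing b y / al; set s := \sum_(i < n) _.
  rewrite -[b](subrK (c *: a 0%N)) Eb.
  rewrite (eq_bigr (fun k : 'I_n => mu k *: a k.+1 - (mu k * (pairing (a k.+1) y / al)) *: a 0%N)); last first.
    by move=> k _; rewrite scalerBr scalerA.
  rewrite sumrB -scaler_suml -/s /bump /=.
  under [X in _ = _ + X]eq_bigr do rewrite add0n.
  by rewrite scalerBl [RHS]addrC addrA addrAC.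
right; exists (y' - (pairing (a 0%N) y' / al) *: y); split.
  case => [_|k]; rewrite pairingBr pairingZr.
    by rewrite -/al divfK // subrr.
  move=> /Hy' ; rewrite pairingBl pairingZl.
  by have -> : pairing (a k.+1) y / al * pairing (a 0%N) y' = pairing (a 0%N) y' / al * pairing (a k.+1) y by ring.
move: by'; rewrite pairingBl pairingZl pairingBr pairingZr.
by have -> : pairing b y / al * pairing (a 0%N) y' = pairing (a 0%N) y' / al * pairing b y by ring.
Qed.

End Farkas.
Section Support.
Variables (R : realType) (d : nat).
Local Notation pairing := (@pairing R d).

Lemma supp_hyp (e : seq 'rV[R]_d) v :
  conv (fun y => y \in e) v -> ~ interior (conv (fun y => y \in e)) v ->
  exists y0, y0 != 0 /\ forall q, q \in e -> pairing v y0 <= pairing q y0.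
Proof.
move=> cv nint; apply: NNPP => Hn; apply: nint.
set m := size e; set a := fun k => e`_k - v.
have Hmu : forall ib : 'I_d * bool, exists mu : nat -> R, (forall k, 0 <= mu k) /\
    (if ib.2 then 1 else -1) *: 'e_ib.1 = \sum_(k < m) mu k *: a k.
  move=> [i s].
  have [//|[y [Hy Hb]]] := farkas m a ((if s then 1 else -1) *: 'e_i).
  exfalso; apply: Hn; exists y; split.
    by apply/eqP => y0; move: Hb; rewrite y0 pairing0r ltxx.
  move=> q qe; rewrite -subr_ge0 -pairingBl -(nth_index 0 qe); apply: Hy.
  by rewrite index_mem.
have [mu Hmu'] := choice_fun Hmu.
set M := \sum_(k < m) \sum_(i < d) (mu (i, true) k + mu (i, false) k).
have M0 : 0 <= M.
  by apply: sumr_ge0 => k _; apply: sumr_ge0 => i _; apply: addr_ge0; [case: (Hmu' (i,true)) | case: (Hmu' (i,false))].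
exists (M + 1)^-1; first by rewrite invr_gt0 ltr_wpDl.
move=> z Hz.
set c := fun k : nat => \sum_(i < d) (if 0 <= z ord0 i then z ord0 i * mu (i, true) k
                                      else - z ord0 i * mu (i, false) k).
have F1 : z = \sum_(k < m) c k *: a k.
  transitivity (\sum_(j < d) z ord0 j *: 'e_j :> 'rV[R]_d); first exact: row_sum_delta.
  rewrite /c; under [RHS]eq_bigr do rewrite scaler_suml.
  rewrite exchange_big /=; apply: eq_bigr => i _.
  have [zi|zi] := boolP (0 <= z ord0 i); rewrite ?zi ?(negbTE zi).
    case: (Hmu' (i, true)) => _ /= E; rewrite -[X in _ *: X]scale1r E scaler_sumr.
    by apply: eq_bigr => k _; rewrite scalerA.
  case: (Hmu' (i, false)) => _ /= E.
  have -> : z ord0 i *: 'e_i = (- z ord0 i) *: (-1 *: 'e_i) :> 'rV[R]_d.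
    by rewrite scalerA mulrN1 opprK.
  rewrite E scaler_sumr; by apply: eq_bigr => k _; rewrite scalerA.
have F2 : forall k, 0 <= c k.
  move=> k; apply: sumr_ge0 => i _; have [zi|zi] := boolP (0 <= z ord0 i); rewrite ?zi ?(negbTE zi).
    by apply: mulr_ge0 => //; case: (Hmu' (i, true)).
  apply: mulr_ge0; last by case: (Hmu' (i, false)).
  by rewrite oppr_ge0 ltW // ltNge.
set C := \sum_(k < m) c k.
have F3 : C < 1.
  apply: (@le_lt_trans _ _ ((M + 1)^-1 * M)); last first.
    by rewrite ltr_pdivrMl ?ltr_wpDl // mulr1 ltrDl.
  rewrite /C /M mulr_sumr; apply: ler_sum => k _; rewrite mulr_sumr; apply: ler_sum => i _.
  have := Hz i; have [mt _] := Hmu' (i, true); have [mf _] := Hmu' (i, false).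
  have := mt k; have := mf k; move: (mu (i, true) k) (mu (i, false) k) => x1 x2.
  have [zi|zi] := boolP (0 <= z ord0 i); rewrite ?zi ?(negbTE zi) => h1 h2 h3.
    by rewrite (ger0_norm zi) in h3; nra.
  rewrite ler0_norm in h3; last by rewrite ltW // ltNge.
  nra.
have Ez : v + z = (1 - C) *: v + \sum_(k < m) c k *: e`_k.
  rewrite F1 /a (eq_bigr (fun k : 'I_m => c k *: e`_k - c k *: v)); last by move=> k _; rewrite scalerBr.
  rewrite sumrB -scaler_suml scalerBl scale1r addrAC.
  by rewrite addrA.
have C0 : 0 <= C by apply: sumr_ge0.
have [C00|Cp] := eqVneq C 0.
  have ck0 : forall k : 'I_m, c k = 0.
    by move=> k; apply: (psumr_eq0P (P := xpredT) (F := fun k : 'I_m => c k)) => // j _.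
  rewrite Ez C00 subr0 scale1r big1 ?addr0 // => k _; by rewrite ck0 scale0r.
have Cp' : 0 < C by rewrite lt_def Cp.
have cw : conv (fun y => y \in e) (\sum_(k < m) (c k / C) *: e`_k).
  exists m, (fun k : 'I_m => e`_k), (fun k : 'I_m => c k / C); split.
  - by move=> k; rewrite mem_nth.
  - by move=> k; rewrite divr_ge0.
  - by rewrite -mulr_suml divff.
  - by [].
have := conv_convex cv cw (t := 1 - C).
rewrite subr_ge0 (ltW F3) gerBl C0 => /(_ isT isT).
rewrite Ez; congr conv; congr (_ + _).
rewrite opprB addrC subrK scaler_sumr; apply: eq_bigr => k _.
by rewrite scalerA mulrC divfK.
Qed.

End Support.
Unset Implicit Arguments.
From mathcomp Require Import zify.
Lemma integral_pairing (R : realType) (d : nat) (s v : 'rV[R]_d) :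
  integral s -> integral v -> exists z : int, pairing s v = z%:~R.
Proof.
move=> Hs Hv; rewrite /pairing; elim/big_rec: _ => [|k x _ [zx ->]]; first by exists 0.
have [a Ha] := Hs k; have [b Hb] := Hv k; exists (a * b + zx).
by rewrite Ha Hb intrD intrM.
Qed.

Theorem mainTheorem10 (R : realType) (d r : nat) (Delta : pset R d)
    (e : seq 'rV[R]_d) (D : 'I_r -> pset R d) (v : 'rV[R]_d) (G : pset R d) :
  reflexive_polytope Delta e ->
  nef_partition Delta e D ->
  integral v ->
  boundary (dual_poly e) v ->
  min_face (dual_poly e) v G ->
  exists i : 'I_r, face (nabla e D i) G.
Proof.
move=> [[SD [SDint SDiff]] [x0 [eps eps0 Hint]] _ _ [_ _ DIff]].
move=> [Dlat DecIff PhiDisj] Hv [cv nint] [faceG Gv Gmin].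
rewrite /dual_poly in cv nint faceG Gmin.
have [y0 [y0n Hy0]] := supp_hyp cv nint.
set c0 := pairing v y0.
have Dx0 : Delta x0.
  by have := Hint 0; rewrite addr0; apply => i; rewrite mxE normr0 ltW.
have c0n : c0 < 0.
  rewrite ltNge; apply/negP => c0p.
  have Hray : forall t, 0 <= t -> Delta (x0 + t *: y0).
    move=> t t0; apply/DIff => q qe; rewrite pairingDl pairingZl.
    have := (DIff x0).1 Dx0 q qe; have := Hy0 q qe; rewrite -/c0 (pairingC y0) => h1 h2.
    have : 0 <= t * pairing q y0 by rewrite mulr_ge0 // (le_trans c0p).
    lra.
  have [i yi] : exists i, y0 ord0 i != 0.
    apply: NNPP => H; have : y0 = 0; last by move/eqP: y0n.
    apply/rowP => i; rewrite mxE.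
    by apply: NNPP => Hi; apply: H; exists i; apply/eqP.
  set B := \sum_(s' <- SD) `|s' ord0 i|.
  have yip : 0 < `|y0 ord0 i| by rewrite normr_gt0.
  set t := (B + `|x0 ord0 i| + 1) / `|y0 ord0 i|.
  have B0 : 0 <= B by apply: sumr_ge0.
  have t0 : 0 <= t by rewrite divr_ge0 // addr_ge0 // addr_ge0.
  have := conv_bound i ((SDiff _).1 (Hray t t0)).
  rewrite -/B !mxE.
  have := lerB_normD (t * y0 ord0 i) (x0 ord0 i).
  rewrite normrM (ger0_norm t0) /t divfK ?lt0r_neq0 // addrC.
  lra.
set x := (- c0)^-1 *: y0.
have hc : (- c0)^-1 * c0 = -1 by rewrite invrN mulNr mulVf ?lt_eqF.
have nc0 : 0 <= (- c0)^-1 by rewrite invr_ge0 oppr_ge0 ltW.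
have Dx : Delta x.
  apply/DIff => q qe; rewrite /x pairingZl -hc (pairingC y0).
  by rewrite ler_wpM2l // Hy0.
have xv : pairing x v = -1 by rewrite /x pairingZl pairingC hc.
have [xs [Dxs Ex]] := (DecIff x).1 Dx.
have Hs : forall j, exists s, [/\ integral s, D j s & pairing s v <= pairing (xs j) v].
  move=> j; have [S [Sint Siff]] := Dlat j.
  have [q [qS qv]] := conv_min v ((Siff _).1 (Dxs j)).
  exists q; split => //; first exact: Sint.
  by apply/Siff; apply: conv_single.
have [s Hs'] := choice_fun Hs.
have Ssum : \sum_j pairing (s j) v <= -1.
  rewrite -xv Ex pairing_suml; apply: ler_sum => j _; by case: (Hs' j).
have [i si] : exists i, pairing (s i) v <= -1.
  apply: NNPP => H.
  have : 0 <= \sum_j pairing (s j) v.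
    apply: sumr_ge0 => j _.
    have [Sj _ _] := Hs' j; have [z Ez] := @integral_pairing _ _ _ _ Sj Hv.
    have : ~ (pairing (s j) v <= -1) by move=> h; apply: H; exists j.
    move=> hz; have h : (-1 : R) < z%:~R by rewrite ltNge -Ez; apply/negP.
    have : (-1 : int) < z by rewrite -(ltr_int R); move: h; rewrite -(intrN R 1).
    by rewrite Ez ler0z; lia.
  lra.
have [_ Dsi _] := Hs' i.
have sq : forall q, q \in e -> -1 <= pairing (s i) q.
  move=> q qe; case: (PhiDisj i q qe) => [[_ H0]|[_ H1]].
    by rewrite (le_trans _ (H0 _ Dsi)) // oppr0 lerN10.
  exact: H1.
have sconv : forall p, conv (fun y => y \in e) p -> -1 <= pairing p (s i).
  by move=> p; apply: conv_ge => q qe; rewrite pairingC sq.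
have vsi : pairing v (s i) = -1.
  by apply/eqP; rewrite eq_le sconv // andbT pairingC.
have GH : forall p, G p -> conv (fun y => y \in e) p /\ pairing p (s i) = -1.
  apply: Gmin => //; exists (s i), (-1); split => //.
have [g [cg [Gge Giff]]] := faceG.
have qg : forall q, q \in e -> cg <= pairing q g.
  by move=> q qe; apply: Gge; apply: conv_single.
have [e0 [e0e _]] := conv_min v cv.
exists i; exists ((`|cg| + 1) *: s i + g), (cg - (`|cg| + 1)).
set t := `|cg| + 1.
have tcg : cg < t by rewrite /t; have := ler_norm cg; lra.
have t0 : 0 < t by rewrite /t ltr_wpDl.
have gen_ge : forall q, q = 0 \/ (q \in e /\ phi_is (D i) q 1) ->
    cg - t <= pairing q (t *: s i + g) /\ (pairing q (t *: s i + g) = cg - t -> q \in e /\ pairing q g = cg).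
  move=> q [->|[qe [_ H1]]].
    rewrite pairing0l; split; first lra.
    move=> h; lra.
  rewrite pairingDr pairingZr (pairingC q (s i)).
  have h1 := H1 _ Dsi; have h2 := qg q qe.
  have h3 : - t <= t * pairing (s i) q by rewrite -mulrN1 ler_wpM2l // ltW.
  split; first lra.
  move=> h; split => //; lra.
split.
  by move=> p; apply: conv_ge => q /gen_ge [].
move=> p; split.
  move=> Gp; have [cp pg] := (Giff p).1 Gp; have [_ ps] := GH p Gp.
  split; last by rewrite pairingDr pairingZr ps pg; lra.
  move: cp pg => [n [q [w [qe w0 w1 Ep]]]] pg.
  rewrite Ep; apply: conv_of_supp => //; first by left.
  move=> j wj; right; split; first exact: qe.
  have qjg : pairing (q j) g = cg.
    apply: (supp_eq (w := w) (p := q)) => //; first by move=> k; apply: qg.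
    by rewrite -Ep.
  have [_ qs] := GH (q j) ((Giff _).2 (conj (conv_single (qe j)) qjg)).
  case: (PhiDisj i (q j) (qe j)) => // [[_ H0]].
  by have := H0 _ Dsi; rewrite (pairingC (s i)) qs oppr0 ler0N1.
move=> [[n [q [w [gq w0 w1 Ep]]]] py].
have Hq : forall j, w j != 0 -> q j \in e /\ pairing (q j) g = cg.
  move=> j wj; apply: (gen_ge _ (gq j)).2.
  apply: (supp_eq (w := w) (p := q)) => //; first by move=> k; case: (gen_ge _ (gq k)).
  by rewrite -Ep.
apply/Giff; split.
  rewrite Ep; apply: (conv_of_supp (q0 := e0)) => // j /Hq []; done.
rewrite Ep pairing_suml.
rewrite (eq_bigr (fun j => w j * cg)); first by rewrite -mulr_suml w1 mul1r.
move=> j _; rewrite pairingZl; have [->|wj] := eqVneq (w j) 0; first by rewrite !mul0r.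
by rewrite (Hq j wj).2.
Qed.
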